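(* For every instance such that $|S_2|>\pi_1+\pi_3+\pi_4-1$, $|S_2|\ge 3$ and $|S_2|$ is odd, we have $H^{PW''}\le \tfrac{24}{13}H^*$.
   Context: An instance consists of an integer $n\ge 1$ and growth rates $1=h(1)\ge h(2)\ge\cdots\ge h(n)>0$ of bamboos $b_1,\dots,b_n$. Bamboo Garden Trimming (discrete version): - All heights are $0$ initially. - On each day $t=1,2,\dots$ every bamboo $b_j$ grows by $h(j)$. - At the end of each day the gardener cuts exactly one bamboo $\sigma(t)\in\{1,\dots,n\}$ back to height $0$. The height of a schedule $\sigma:\mathbb{N}\to\{1,\dots,n\}$ is the supremum, over all days $t$ and all $j$, of the height of $b_j$ at the end of day $t$ just before the cut. $H^*$ denotes the infimum of this height over all schedules. Value of algorithm PW'': - Split $\{1,\dots,n\}$ into four sets: - $S_1=\{j: \tfrac23<h(j)\le 1\}$; - $S_2=\{j:\tfrac12<h(j)\le\tfrac23\}$; - $S_3=\{j: h(j)\le\tfrac12 \text{ and } \tfrac23 2^{-k}<h(j)\le 2^{-k}\text{ for some integer }k\ge1\}$; - $S_4=\{j: h(j)\le\tfrac12\text{ and } 2^{-(k+1)}<h(j)\le \tfrac23 2^{-k}\text{ for some integer }k\ge 1\}$. - Modified growths: $h''(j)=2^{-k}$ for $j\in S_3$ and $h''(j)=\tfrac23 2^{-k}$ for $j\in S_4$, with $k$ as in the definition of the set. - Let $\pi_1=|S_1|$, $sh_3=\sum_{j\in S_3}h''(j)$, $sh_4=\sum_{j\in S_4}h''(j)$, $\pi_3=\lfloor sh_3\rfloor$,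 $\pi_4=\lfloor sh_4\rfloor$, $f_3=sh_3-\pi_3$, $f_4=sh_4-\pi_4$. - Option (a): $\pi_R(a)=\lceil f_3+f_4\rceil$ and $z(a)=\pi_1+|S_2|+\pi_3+\pi_4+\pi_R(a)$. - Option (b): if $S_2=\emptyset$ put $z(b)=+\infty$. Otherwise let $h^*=\max_{j\in S_2}h(j)$ and $f_2=\tfrac12$ if $|S_2|$ is odd, $f_2=0$ if $|S_2|$ is even. Then $\pi_R(b)=\lceil f_2+f_3+f_4\rceil$ and $z(b)=2h^*\,(\pi_1+\lfloor |S_2|/2\rfloor+\pi_3+\pi_4+\pi_R(b))$. - The value returned by algorithm PW'' is $H^{PW''}=\min\{z(a),z(b)\}$. The paper takes this as the maximum height of the periodic pinwheel trimming schedule that it builds from these partitions. *)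

(* Defs.v *)
From Stdlib Require Import Reals Lra Lia ZArith Arith List ClassicalEpsilon.
Open Scope R_scope.

(** * Instances: growth rates h(1..n), indices 1..n (h j for j outside is irrelevant). *)
Definition instance (n : nat) (h : nat -> R) : Prop :=
  (1 <= n)%nat /\ h 1%nat = 1 /\
  (forall j, (1 <= j < n)%nat -> h (S j) <= h j) /\
  (forall j, (1 <= j <= n)%nat -> 0 < h j).

Definition valid_schedule (n : nat) (sigma : nat -> nat) : Prop :=
  forall t, (1 <= t)%nat -> (1 <= sigma t <= n)%nat.

(* height of bamboo j at the end of day t, after the cut of day t *)
Fixpoint height_after (h : nat -> R) (sigma : nat -> nat) (j t : nat) : R :=
  match t with
  | O => 0
  | S t' => if Nat.eqb (sigma (S t')) j then 0
            else height_after h sigma j t' + h j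
  end.

Definition height_before (h : nat -> R) (sigma : nat -> nat) (j t : nat) : R :=
  height_after h sigma j (t - 1) + h j.

Definition heights (n : nat) (h : nat -> R) (sigma : nat -> nat) (x : R) : Prop :=
  exists t j, (1 <= t)%nat /\ (1 <= j <= n)%nat /\ x = height_before h sigma j t.

Definition schedule_height (n : nat) (h : nat -> R) (sigma : nat -> nat) (H : R) : Prop :=
  is_lub (heights n h sigma) H.

Definition is_glb (E : R -> Prop) (m : R) : Prop :=
  (forall x, E x -> m <= x) /\ (forall b, (forall x, E x -> b <= x) -> b <= m).

Definition is_Hstar (n : nat) (h : nat -> R) (Hs : R) : Prop :=
  is_glb (fun H => exists sigma, valid_schedule n sigma /\ schedule_height n h sigma H) Hs.

Definition Rleb (x y : R) : bool := if Rle_dec x y then true else false.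
Definition Rltb (x y : R) : bool := if Rlt_dec x y then true else false.

Definition lvl (x : R) : nat :=
  epsilon (inhabits 0%nat) (fun k => (/2) ^ (S k) < x <= (/2) ^ k).

Definition inS1 (h : nat -> R) (j : nat) : bool := Rltb (2/3) (h j) && Rleb (h j) 1.
Definition inS2 (h : nat -> R) (j : nat) : bool := Rltb (1/2) (h j) && Rleb (h j) (2/3).
Definition inS3 (h : nat -> R) (j : nat) : bool :=
  Rleb (h j) (1/2) && Rltb (2/3 * (/2) ^ lvl (h j)) (h j).
Definition inS4 (h : nat -> R) (j : nat) : bool :=
  Rleb (h j) (1/2) && Rleb (h j) (2/3 * (/2) ^ lvl (h j)).

Definition idx (n : nat) : list nat := List.seq 1 n.

Definition card (n : nat) (P : nat -> bool) : nat := length (filter P (idx n)).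

Definition sumR (n : nat) (P : nat -> bool) (f : nat -> R) : R :=
  fold_right (fun j acc => (if P j then f j else 0) + acc) 0 (idx n).

Definition hpp3 (h : nat -> R) (j : nat) : R := (/2) ^ lvl (h j).
Definition hpp4 (h : nat -> R) (j : nat) : R := 2/3 * (/2) ^ lvl (h j).

Definition Rfloor (x : R) : Z := Int_part x.
Definition Rceil (x : R) : Z := (- Int_part (- x))%Z.

Definition pi1 n h : nat := card n (inS1 h).
Definition s2 n h : nat := card n (inS2 h).
Definition sh3 n h : R := sumR n (inS3 h) (hpp3 h).
Definition sh4 n h : R := sumR n (inS4 h) (hpp4 h).
Definition pi3 n h : Z := Rfloor (sh3 n h).
Definition pi4 n h : Z := Rfloor (sh4 n h).
Definition f3 n h : R := sh3 n h - IZR (pi3 n h).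
Definition f4 n h : R := sh4 n h - IZR (pi4 n h).

Definition z_a n h : R :=
  INR (pi1 n h) + INR (s2 n h) + IZR (pi3 n h) + IZR (pi4 n h)
  + IZR (Rceil (f3 n h + f4 n h)).

Definition hstar2 n h : R :=
  fold_right (fun j acc => Rmax (h j) acc) 0 (filter (inS2 h) (idx n)).

Definition f2 n h : R := if Nat.odd (s2 n h) then 1/2 else 0.

(* only meaningful when S2 is nonempty *)
Definition z_b n h : R :=
  2 * hstar2 n h *
  (INR (pi1 n h) + INR (Nat.div2 (s2 n h)) + IZR (pi3 n h) + IZR (pi4 n h)
   + IZR (Rceil (f2 n h + f3 n h + f4 n h))).

(* z(b) = +infinity when S2 is empty *)
Definition H_PW (n : nat) (h : nat -> R) : R :=
  if Nat.eqb (s2 n h) 0 then z_a n h else Rmin (z_a n h) (z_b n h).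

(* Main.v *)
Require Import Defs.
From Stdlib Require Import Reals Lra Lia Psatz ZArith Arith List ClassicalEpsilon.
Open Scope R_scope.

Definition ls (l : list nat) (f : nat -> R) : R := fold_right (fun j acc => f j + acc) 0 l.

Lemma ls_plus l f g : ls l (fun j => f j + g j) = ls l f + ls l g.
Proof. induction l; simpl; [lra|]. rewrite IHl; lra. Qed.

Lemma ls_zero l : ls l (fun _ => 0) = 0.
Proof. induction l; simpl; [lra|]. rewrite IHl; lra. Qed.

Lemma ls_le_const l f H : (forall j, In j l -> f j <= H) -> ls l f <= INR (length l) * H.
Proof.
  induction l; intros Hf; [simpl; lra|].
  change (ls (a::l) f) with (f a + ls l f). change (length (a::l)) with (Datatypes.S (length l)).
  rewrite S_INR. assert (f a <= H) by (apply Hf; left; auto).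
  assert (ls l f <= INR (length l) * H) by (apply IHl; intros; apply Hf; right; auto). lra.
Qed.

Lemma ls_notin g k l : ~ In k l -> ls l (fun j => if Nat.eqb k j then 0 else g j) = ls l g.
Proof.
  induction l; intros Hn; simpl; auto.
  destruct (Nat.eqb_spec k a). { exfalso; apply Hn; left; auto. }
  rewrite IHl; auto. intro; apply Hn; right; auto.
Qed.

Lemma ls_cut g k l : NoDup l -> In k l ->
  ls l (fun j => if Nat.eqb k j then 0 else g j) = ls l g - g k.
Proof.
  induction l; intros Hd Hi; simpl; [destruct Hi|].
  inversion Hd; subst.
  destruct (Nat.eqb_spec k a).
  - subst. rewrite ls_notin; auto. lra.
  - destruct Hi as [Hi|Hi]; [congruence|]. rewrite IHl; auto. lra.
Qed.

Lemma lower_sum n h sigma H :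
  (forall j, (1 <= j <= n)%nat -> 0 < h j) ->
  valid_schedule n sigma ->
  (forall x, heights n h sigma x -> x <= H) ->
  ls (idx n) h <= H.
Proof.
  intros Hpos Hv Hub.
  set (S t := ls (idx n) (fun j => height_after h sigma j t)).
  assert (Hin : forall j, In j (idx n) -> (1 <= j <= n)%nat).
  { intros j Hj. unfold idx in Hj. apply in_seq in Hj. lia. }
  assert (Hstep : forall t, S (Datatypes.S t) >= S t + ls (idx n) h - H).
  { intros t. unfold S.
    change (ls (idx n) (fun j => if Nat.eqb (sigma (Datatypes.S t)) j then 0
              else height_after h sigma j t + h j) >=
            ls (idx n) (fun j => height_after h sigma j t) + ls (idx n) h - H).
    assert (Hk : (1 <= sigma (Datatypes.S t) <= n)%nat) by (apply Hv; lia).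
    rewrite ls_cut.
    2:{ apply seq_NoDup. }
    2:{ unfold idx; apply in_seq; lia. }
    rewrite ls_plus.
    assert (height_after h sigma (sigma (Datatypes.S t)) t + h (sigma (Datatypes.S t)) <= H).
    { apply Hub. exists (Datatypes.S t), (sigma (Datatypes.S t)). split; [lia|split; auto].
      unfold height_before. replace (Datatypes.S t - 1)%nat with t by lia. auto. }
    lra. }
  assert (Hlow : forall T, S T >= INR T * (ls (idx n) h - H)).
  { induction T.
    - unfold S. simpl. rewrite ls_zero. lra.
    - rewrite S_INR. specialize (Hstep T). lra. }
  assert (Hup : forall T, S T <= INR n * H).
  { intros T. unfold S. replace n with (length (idx n)) at 2 by (unfold idx; apply length_seq).
    apply ls_le_const. intros j Hj. apply Hin in Hj.
    assert (height_after h sigma j T + h j <= H).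
    { apply Hub. exists (Datatypes.S T), j. split; [lia|split; auto].
      unfold height_before. replace (Datatypes.S T - 1)%nat with T by lia. auto. }
    specialize (Hpos j Hj). lra. }
  destruct (Rle_dec (ls (idx n) h) H) as [|Hgt]; auto.
  apply Rnot_le_lt in Hgt. exfalso.
  destruct (INR_unbounded (INR n * H / (ls (idx n) h - H))) as [T HT].
  specialize (Hlow T). specialize (Hup T).
  assert (INR T * (ls (idx n) h - H) > INR n * H).
  { apply Rmult_gt_compat_r with (r := ls (idx n) h - H) in HT; [|lra].
    unfold Rdiv in HT. rewrite Rmult_assoc, Rinv_l in HT; lra. }
  lra.
Qed.
Definition fs (l : list nat) (P : nat -> bool) (f : nat -> R) : R :=
  fold_right (fun j acc => (if P j then f j else 0) + acc) 0 l.

Lemma lvl_spec x : 0 < x <= 1 -> (/2)^(S (lvl x)) < x <= (/2)^(lvl x).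
Proof.
  intros Hx. unfold lvl. apply epsilon_spec.
  destruct (pow_lt_1_zero (/2)) with (y := x) as [N HN].
  { rewrite Rabs_pos_eq; lra. } { lra. }
  specialize (HN N (le_n N)). rewrite Rabs_pos_eq in HN by (apply pow_le; lra).
  assert (HP : forall M, (/2)^(S M) < x -> exists k, (/2)^(S k) < x <= (/2)^k).
  { induction M; intros HM.
    - exists 0%nat. simpl. lra.
    - destruct (Rle_dec x ((/2)^(S M))).
      + exists (S M). split; auto.
      + apply IHM. lra. }
  apply (HP N). simpl. assert (0 <= (/2)^N) by (apply pow_le; lra). lra.
Qed.

Lemma elem_bound h j : 0 < h j <= 1 ->
  h j >= (if inS1 h j then 2/3 else 0) + (if inS2 h j then h j else 0)
        + 2/3 * (if inS3 h j then hpp3 h j else 0) + 2/3 * (if inS4 h j then hpp4 h j else 0).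
Proof.
  intros Hj. pose proof (lvl_spec (h j) Hj) as Hs.
  unfold inS1, inS2, inS3, inS4, hpp3, hpp4, Rltb, Rleb.
  set (p := (/2)^(lvl (h j))) in *. simpl in Hs. fold p in Hs.
  assert (0 < p) by (unfold p; apply pow_lt; lra).
  repeat destruct (Rlt_dec _ _); repeat destruct (Rle_dec _ _); simpl; lra.
Qed.

Lemma list_bound h l : (forall j, In j l -> 0 < h j <= 1) ->
  ls l h >= 2/3 * fs l (inS1 h) (fun _ => 1) + fs l (inS2 h) h
            + 2/3 * fs l (inS3 h) (hpp3 h) + 2/3 * fs l (inS4 h) (hpp4 h).
Proof.
  induction l; intros Hl; simpl; [lra|].
  pose proof (elem_bound h a (Hl a (or_introl eq_refl))).
  assert (IH := IHl (fun j Hj => Hl j (or_intror Hj))).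
  destruct (inS1 h a), (inS2 h a), (inS3 h a), (inS4 h a); lra.
Qed.

Lemma fs_length l P : INR (length (filter P l)) = fs l P (fun _ => 1).
Proof.
  induction l as [|a l IH]; [reflexivity|]. cbn [filter].
  change (fs (a::l) P (fun _ => 1)) with ((if P a then 1 else 0) + fs l P (fun _ => 1)).
  destruct (P a).
  - change (length (a :: filter P l)) with (S (length (filter P l))). rewrite S_INR, IH; lra.
  - rewrite IH; lra.
Qed.

Lemma fs_filter l P f : fs l P f = ls (filter P l) f.
Proof. induction l; simpl; auto. destruct (P a); simpl; rewrite IHl; lra. Qed.

Lemma head_classes h : h 1%nat = 1 ->
  inS1 h 1 = true /\ inS2 h 1 = false /\ inS3 h 1 = false /\ inS4 h 1 = false.
Proof.
  intros H1. unfold inS1, inS2, inS3, inS4, Rltb, Rleb. rewrite H1.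
  repeat destruct (Rlt_dec _ _); repeat destruct (Rle_dec _ _); simpl; repeat split; lra.
Qed.

Definition rmaxl (h : nat -> R) (L : list nat) := fold_right (fun j acc => Rmax (h j) acc) 0 L.

Lemma s2_bound h L : (forall j, In j L -> 1/2 < h j <= 2/3) ->
  ls L h >= rmaxl h L + (INR (length L) - 1)/2 /\ ls L h >= INR (length L)/2 /\
  rmaxl h L <= 2/3 /\ (L <> nil -> 1/2 < rmaxl h L).
Proof.
  induction L; intros HL.
  - simpl. repeat split; try lra. intros C; congruence.
  - destruct (IHL (fun j Hj => HL j (or_intror Hj))) as [A [B [C D]]].
    pose proof (HL a (or_introl eq_refl)).
    change (ls (a :: L) h) with (h a + ls L h) in *.
    change (rmaxl h (a::L)) with (Rmax (h a) (rmaxl h L)).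
    change (length (a::L)) with (S (length L)). rewrite S_INR.
    apply Rmax_case_strong; intros; repeat split; try lra; intros; lra.
Qed.
Lemma arith (m q x F c c' : R) : 1 <= m -> 1 <= q -> m <= 2*q+1 -> 1/2 < x <= 2/3 -> 0 <= F < 2 ->
 F <= c < F+1 -> F + 1/2 <= c' < F + 3/2 -> (c = 0 \/ c = 1 \/ c = 2) -> (c' = 1 \/ c' = 2 \/ c' = 3) ->
 Rmin (m+(2*q+1)+c) (2*x*(m+q+c')) <= 24/13 * (2/3*m + 1/3 + x + q + 2/3*F).
Proof.
  intros H0 H1 H2 H3 H4 H5 H6 Hc Hc'. destruct (Rle_dec (m+(2*q+1)+c) (24/13 * (2/3*m + 1/3 + x + q + 2/3*F))) as [Ha|Ha].
  - eapply Rle_trans; [apply Rmin_l|exact Ha].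
  - eapply Rle_trans; [apply Rmin_r|]. apply Rnot_le_lt in Ha.
    destruct Hc as [E1|[E1|E1]]; destruct Hc' as [E2|[E2|E2]]; rewrite E1, E2 in *; try lra; nra.
Qed.

Lemma fs_nonneg l P f : (forall j, 0 <= f j) -> 0 <= fs l P f.
Proof. intros Hf. induction l; simpl; [lra|]. destruct (P a); [specialize (Hf a)|]; lra. Qed.

Lemma inS2_bounds h j : inS2 h j = true -> 1/2 < h j <= 2/3.
Proof.
  unfold inS2, Rltb, Rleb. repeat destruct (Rlt_dec _ _); repeat destruct (Rle_dec _ _); simpl;
  intros; try discriminate; lra.
Qed.

Lemma floor_props r : 0 <= r -> 0 <= IZR (Rfloor r) /\ 0 <= r - IZR (Rfloor r) < 1.
Proof.
  intros Hr. unfold Rfloor. destruct (base_Int_part r) as [A B].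
  assert (-1 < Int_part r)%Z by (apply lt_IZR; simpl; lra).
  assert (0 <= IZR (Int_part r)) by (apply IZR_le; lia). lra.
Qed.

Lemma ceil_props y : y <= IZR (Rceil y) < y + 1.
Proof.
  unfold Rceil. rewrite opp_IZR. destruct (base_Int_part (-y)) as [A B]. lra.
Qed.

Theorem proposition4 (n : nat) (h : nat -> R) (Hs : R) :
  instance n h ->
  is_Hstar n h Hs ->
  (Z.of_nat (s2 n h) > Z.of_nat (pi1 n h) + pi3 n h + pi4 n h - 1)%Z ->
  (3 <= s2 n h)%nat ->
  Nat.odd (s2 n h) = true ->
  H_PW n h <= 24 / 13 * Hs.
Proof.
  intros Hinst Hstar Hz H3 Hodd.
  destruct Hinst as [Hn [H1 [Hdec Hpos]]].
  assert (Hle1 : forall j, (1 <= j <= n)%nat -> h j <= 1).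
  { induction j; intros Hj; [lia|]. destruct j; [rewrite H1; lra|].
    assert (h (S (S j)) <= h (S j)) by (apply Hdec; lia).
    assert (h (S j) <= 1) by (apply IHj; lia). lra. }
  assert (Hsum : ls (idx n) h <= Hs).
  { destruct Hstar as [_ Hglb]. apply Hglb. intros x [sigma [Hv Hlub]].
    apply (lower_sum n h sigma); auto. intros y Hy. apply Hlub; auto. }
  assert (Hdecomp : ls (idx n) h >= 1/3 + 2/3 * INR (pi1 n h)
            + ls (filter (inS2 h) (idx n)) h + 2/3 * sh3 n h + 2/3 * sh4 n h).
  { unfold pi1, card, sh3, sh4, sumR. rewrite fs_length, <- fs_filter.
    fold (fs (idx n) (inS3 h) (hpp3 h)). fold (fs (idx n) (inS4 h) (hpp4 h)).
    destruct n as [|n']; [lia|].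
    change (idx (S n')) with (1%nat :: seq 2 n').
    destruct (head_classes h H1) as [E1 [E2 [E3 E4]]].
    change (ls (1%nat :: seq 2 n') h) with (h 1%nat + ls (seq 2 n') h).
    cbn [fs fold_right]. rewrite E1, E2, E3, E4.
    fold (fs (seq 2 n') (inS1 h) (fun _ => 1)). fold (fs (seq 2 n') (inS2 h) h).
    fold (fs (seq 2 n') (inS3 h) (hpp3 h)). fold (fs (seq 2 n') (inS4 h) (hpp4 h)).
    assert (B := list_bound h (seq 2 n')).
    assert (B' : forall j, In j (seq 2 n') -> 0 < h j <= 1).
    { intros j Hj. apply in_seq in Hj. split; [apply Hpos|apply Hle1]; lia. }
    specialize (B B'). rewrite H1. lra. }
  set (L2 := filter (inS2 h) (idx n)) in *.
  destruct (s2_bound h L2) as [S2a [_ [S2c S2d]]].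
  { intros j Hj. unfold L2 in Hj. apply filter_In in Hj. apply inS2_bounds; tauto. }
  assert (Hlen : length L2 = s2 n h) by reflexivity.
  assert (Hhs : hstar2 n h = rmaxl h L2) by reflexivity.
  assert (HL2 : L2 <> nil) by (intro E; rewrite E in Hlen; simpl in Hlen; lia).
  specialize (S2d HL2). rewrite Hlen in S2a. rewrite <- Hhs in S2a, S2c, S2d.
  set (q := Nat.div2 (s2 n h)).
  assert (Hqn : s2 n h = (2 * q + 1)%nat).
  { unfold q. rewrite (Nat.div2_odd (s2 n h)) at 1. rewrite Hodd. reflexivity. }
  assert (Hs2r : INR (s2 n h) = 2 * INR q + 1).
  { rewrite Hqn, plus_INR, mult_INR. simpl. lra. }
  assert (Hq1 : 1 <= INR q) by (apply (le_INR 1); lia).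
  assert (Hsh3 : 0 <= sh3 n h).
  { apply fs_nonneg. intros j. unfold hpp3. apply pow_le. lra. }
  assert (Hsh4 : 0 <= sh4 n h).
  { apply fs_nonneg. intros j. unfold hpp4. assert (0 <= (/2)^lvl (h j)) by (apply pow_le; lra). lra. }
  destruct (floor_props _ Hsh3) as [P3 F3]. destruct (floor_props _ Hsh4) as [P4 F4].
  fold (pi3 n h) in P3, F3. fold (pi4 n h) in P4, F4. fold (f3 n h) in F3. fold (f4 n h) in F4.
  assert (Hpi1 : 1 <= INR (pi1 n h)).
  { apply (le_INR 1). unfold pi1, card. destruct n as [|n']; [lia|].
    change (idx (S n')) with (1%nat :: seq 2 n'). simpl. 
    destruct (head_classes h H1) as [E1 _]. rewrite E1. simpl. lia. }
  assert (Hm : INR (pi1 n h) + IZR (pi3 n h) + IZR (pi4 n h) <= INR (s2 n h)).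
  { rewrite !INR_IZR_INZ, <- !plus_IZR. apply IZR_le. lia. }
  set (F := f3 n h + f4 n h).
  pose proof (ceil_props F) as C1.
  pose proof (ceil_props (f2 n h + f3 n h + f4 n h)) as C2.
  assert (Hf2 : f2 n h = 1/2) by (unfold f2; rewrite Hodd; reflexivity).
  rewrite Hf2 in C2. replace (1/2 + f3 n h + f4 n h) with (F + 1/2) in * by (unfold F; lra).
  assert (Hc : IZR (Rceil F) = 0 \/ IZR (Rceil F) = 1 \/ IZR (Rceil F) = 2).
  { assert (-1 < Rceil F)%Z by (apply lt_IZR; simpl; unfold F in *; lra).
    assert (Rceil F < 3)%Z by (apply lt_IZR; simpl; unfold F in *; lra).
    assert (E : (Rceil F = 0 \/ Rceil F = 1 \/ Rceil F = 2)%Z) by lia.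
    destruct E as [E|[E|E]]; rewrite E; auto. }
  assert (Hc' : IZR (Rceil (F + 1/2)) = 1 \/ IZR (Rceil (F + 1/2)) = 2 \/ IZR (Rceil (F + 1/2)) = 3).
  { assert (0 < Rceil (F + 1/2))%Z by (apply lt_IZR; simpl; unfold F in *; lra).
    assert (Rceil (F + 1/2) < 4)%Z by (apply lt_IZR; simpl; unfold F in *; lra).
    assert (E : (Rceil (F + 1/2) = 1 \/ Rceil (F + 1/2) = 2 \/ Rceil (F + 1/2) = 3)%Z) by lia.
    destruct E as [E|[E|E]]; rewrite E; auto. }
  unfold H_PW.
  assert (E0 : Nat.eqb (s2 n h) 0 = false) by (apply Nat.eqb_neq; lia). rewrite E0.
  assert (Hza : z_a n h = (INR (pi1 n h) + IZR (pi3 n h) + IZR (pi4 n h)) + (2 * INR q + 1) + IZR (Rceil F)).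
  { unfold z_a. fold F. rewrite Hs2r. lra. }
  assert (Hzb : z_b n h = 2 * hstar2 n h * ((INR (pi1 n h) + IZR (pi3 n h) + IZR (pi4 n h)) + INR q + IZR (Rceil (F + 1/2)))).
  { unfold z_b. fold q. rewrite Hf2. replace (1/2 + f3 n h + f4 n h) with (F + 1/2) by (unfold F; lra). ring. }
  rewrite Hza, Hzb.
  eapply Rle_trans.
  { apply (arith (INR (pi1 n h) + IZR (pi3 n h) + IZR (pi4 n h)) (INR q) (hstar2 n h) F); try lra.
    unfold F; lra. }
  unfold F, f3, f4 in *. lra.
Qed.
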